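(* Fix $\varepsilon_{\mathrm{TV}}>0$, weights $\psi_k\ge0$ ($k=1,\dots,p$), and index sets $N_i\subseteq\{1,\dots,n\}\setminus\{i\}$ ($i=1,\dots,n$). For $\mathbf{K}\in\mathbb{R}_{\ge0}^{n\times p}$ set $|\nabla_{ik}\mathbf{K}|:=\sqrt{\varepsilon_{\mathrm{TV}}^2+\sum_{\ell\in N_i}(K_{ik}-K_{\ell k})^2}$ and consider the cost functional $$F(\mathbf{K}):=\mathrm{TV}(\mathbf{K}):=\sum_{k=1}^p\psi_k\sum_{i=1}^n|\nabla_{ik}\mathbf{K}|.$$ Then $$Q_{\mathrm{TV}}(\mathbf{K},\mathbf{A}):=\sum_{k=1}^p\psi_k\sum_{i=1}^n\frac{\varepsilon_{\mathrm{TV}}^2+\sum_{\ell\in N_i}\big[(K_{ik}-K_{\ell k})(A_{ik}-A_{\ell k})+(K_{\ell k}-A_{\ell k})^2+(K_{ik}-A_{ik})^2\big]}{|\nabla_{ik}\mathbf{A}|}$$ defines a separable and convex surrogate functional for $F$.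
   Context: The arguments $\mathbf{K},\mathbf{A}$ range over $n\times p$ matrices with positive entries. A map $Q_F$ is a surrogate functional for $F$ if $Q_F(\mathbf{x},\mathbf{a})\ge F(\mathbf{x})$ for all $\mathbf{x},\mathbf{a}$ and $Q_F(\mathbf{x},\mathbf{x})=F(\mathbf{x})$ for all $\mathbf{x}$. A surrogate is separable if $Q_F(\mathbf{x},\mathbf{a})=\sum_i g_i(x_i,\mathbf{a})$ for some functions $g_i$ (matrix entries playing the role of coordinates). Convexity refers to the first argument. *)

(* Defs.v *)
From mathcomp Require Import all_boot all_order all_algebra.
Set Implicit Arguments. Unset Strict Implicit. Unset Printing Implicit Defensive.
Import Order.TTheory GRing.Theory Num.Theory.
Local Open Scope ring_scope.

Section TV.
Variables (R : rcfType) (n p : nat).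

Definition posmx (K : 'M[R]_(n, p)) : Prop := forall i k, 0 < K i k.

Definition gradTV (eps : R) (N : 'I_n -> {set 'I_n}) (K : 'M[R]_(n, p))
    (i : 'I_n) (k : 'I_p) : R :=
  Num.sqrt (eps ^+ 2 + \sum_(l in N i) (K i k - K l k) ^+ 2).

Definition TV (eps : R) (psi : 'I_p -> R) (N : 'I_n -> {set 'I_n})
    (K : 'M[R]_(n, p)) : R :=
  \sum_(k < p) psi k * \sum_(i < n) gradTV eps N K i k.

Definition QTV (eps : R) (psi : 'I_p -> R) (N : 'I_n -> {set 'I_n})
    (K A : 'M[R]_(n, p)) : R :=
  \sum_(k < p) psi k * \sum_(i < n)
    ((eps ^+ 2 + \sum_(l in N i)
        ((K i k - K l k) * (A i k - A l k) + (K l k - A l k) ^+ 2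
         + (K i k - A i k) ^+ 2)) / gradTV eps N A i k).

Definition is_surrogate (F : 'M[R]_(n, p) -> R)
    (Q : 'M[R]_(n, p) -> 'M[R]_(n, p) -> R) : Prop :=
  (forall K A, posmx K -> posmx A -> F K <= Q K A) /\
  (forall K, posmx K -> Q K K = F K).

Definition separable (Q : 'M[R]_(n, p) -> 'M[R]_(n, p) -> R) : Prop :=
  exists g : 'I_n -> 'I_p -> R -> 'M[R]_(n, p) -> R,
    forall K A, posmx K -> posmx A ->
      Q K A = \sum_(i < n) \sum_(k < p) g i k (K i k) A.

Definition convex_first (Q : 'M[R]_(n, p) -> 'M[R]_(n, p) -> R) : Prop :=
  forall A X Y (t : R), posmx A -> posmx X -> posmx Y -> 0 <= t -> t <= 1 ->
    Q ((1 - t) *: X + t *: Y) A <= (1 - t) * Q X A + t * Q Y A.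

End TV.

(* Main.v *)
Require Import Defs.
From mathcomp Require Import all_boot all_order all_algebra.
From mathcomp Require Import ring lra.
Import Order.TTheory GRing.Theory Num.Theory.
Local Open Scope ring_scope.

Section Aux.
Variable R : rcfType.

Lemma conv_sum (I : finType) (P : pred I) (f g h : I -> R) (t : R) :
  (forall i, P i -> f i <= (1 - t) * g i + t * h i) ->
  \sum_(i | P i) f i <= (1 - t) * \sum_(i | P i) g i + t * \sum_(i | P i) h i.
Proof.
move=> H; rewrite !mulr_sumr -big_split /=; exact: ler_sum.
Qed.

Lemma conv_scale (c u x y t : R) : 0 <= c -> u <= (1 - t) * x + t * y ->
  c * u <= (1 - t) * (c * x) + t * (c * y).
Proof.
move=> hc h; have -> : (1 - t) * (c * x) + t * (c * y) = c * ((1 - t) * x + t * y) by ring.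
exact: ler_wpM2l.
Qed.

Lemma conv_div (b u x y t : R) : 0 < b -> u <= (1 - t) * x + t * y ->
  u / b <= (1 - t) * (x / b) + t * (y / b).
Proof.
move=> hb h; have -> : (1 - t) * (x / b) + t * (y / b) = ((1 - t) * x + t * y) / b by rewrite mulrA mulrA -mulrDl.
by rewrite ler_pM2r // invr_gt0.
Qed.

Lemma conv_add (e u x y t : R) : u <= (1 - t) * x + t * y ->
  e + u <= (1 - t) * (e + x) + t * (e + y).
Proof.
move=> h; have -> : (1 - t) * (e + x) + t * (e + y) = e + ((1 - t) * x + t * y) by ring.
by rewrite lerD2l.
Qed.

Lemma conv_term (xi xl yi yl ai al t : R) : 0 <= t -> t <= 1 ->
  (((1 - t) * xi + t * yi) - ((1 - t) * xl + t * yl)) * (ai - al)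
  + (((1 - t) * xl + t * yl) - al) ^+ 2 + (((1 - t) * xi + t * yi) - ai) ^+ 2 <=
  (1 - t) * ((xi - xl) * (ai - al) + (xl - al) ^+ 2 + (xi - ai) ^+ 2)
  + t * ((yi - yl) * (ai - al) + (yl - al) ^+ 2 + (yi - ai) ^+ 2).
Proof.
move=> t0 t1; rewrite -subr_ge0.
set L := (X in _ - X).
set Rr := (X in X - _).
have -> : Rr - L = t * (1 - t) * ((xl - yl) ^+ 2 + (xi - yi) ^+ 2) by rewrite /Rr /L; ring.
apply: mulr_ge0; first by apply: mulr_ge0; lra.
by apply: addr_ge0; apply: sqr_ge0.
Qed.

Lemma surr_term (eps : R) (I : finType) (P : pred I) (ki kl ai al : I -> R) :
  0 < eps ->
  Num.sqrt (eps ^+ 2 + \sum_(l | P l) (ki l - kl l) ^+ 2) <=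
  (eps ^+ 2 + \sum_(l | P l) ((ki l - kl l) * (ai l - al l)
          + (kl l - al l) ^+ 2 + (ki l - ai l) ^+ 2)) /
    Num.sqrt (eps ^+ 2 + \sum_(l | P l) (ai l - al l) ^+ 2).
Proof.
move=> he.
set a := Num.sqrt (eps ^+ 2 + \sum_(l | P l) (ki l - kl l) ^+ 2).
set b := Num.sqrt (eps ^+ 2 + \sum_(l | P l) (ai l - al l) ^+ 2).
have s0 : forall f : I -> R, 0 <= eps ^+ 2 + \sum_(l | P l) f l ^+ 2.
  by move=> f; apply: addr_ge0; [apply: sqr_ge0 | apply: sumr_ge0 => l _; apply: sqr_ge0].
have e0 : 0 < eps ^+ 2 by apply: exprn_gt0.
have b0 : 0 < b.
  rewrite sqrtr_gt0; apply: (lt_le_trans e0); rewrite lerDl.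
  by apply: sumr_ge0 => l _; apply: sqr_ge0.
rewrite ler_pdivlMr //.
have ha : a ^+ 2 = eps ^+ 2 + \sum_(l | P l) (ki l - kl l) ^+ 2 by rewrite sqr_sqrtr.
have hb : b ^+ 2 = eps ^+ 2 + \sum_(l | P l) (ai l - al l) ^+ 2 by rewrite sqr_sqrtr.
have h1 : 2 * (a * b) <= a ^+ 2 + b ^+ 2.
  rewrite -subr_ge0; have -> : a ^+ 2 + b ^+ 2 - 2 * (a * b) = (a - b) ^+ 2 by ring.
  exact: sqr_ge0.
set S := \sum_(l | P l) _.
have h2 : a ^+ 2 + b ^+ 2 <= 2 * (eps ^+ 2 + S).
  rewrite ha hb /S.
  have -> : eps ^+ 2 + \sum_(l | P l) (ki l - kl l) ^+ 2 + (eps ^+ 2 + \sum_(l | P l) (ai l - al l) ^+ 2)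
    = 2 * eps ^+ 2 + \sum_(l | P l) ((ki l - kl l) ^+ 2 + (ai l - al l) ^+ 2) by rewrite big_split /=; ring.
  rewrite mulrDr lerD2l mulr_sumr; apply: ler_sum => l _.
  rewrite -subr_ge0.
  have -> : 2 * ((ki l - kl l) * (ai l - al l) + (kl l - al l) ^+ 2 + (ki l - ai l) ^+ 2) -
    ((ki l - kl l) ^+ 2 + (ai l - al l) ^+ 2) = ((ki l - ai l) + (kl l - al l)) ^+ 2 by ring.
  exact: sqr_ge0.
have := le_trans h1 h2; rewrite ler_pM2l //.
Qed.

End Aux.

Theorem theorem5 (R : rcfType) (n p : nat) (eps : R) (psi : 'I_p -> R)
    (N : 'I_n -> {set 'I_n}) :
  0 < eps ->
  (forall k, 0 <= psi k) ->
  (forall i, i \notin N i) ->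
  is_surrogate (TV eps psi N) (QTV eps psi N) /\
  separable (QTV eps psi N) /\
  convex_first (QTV eps psi N).
Proof.
move=> he hpsi _.
have e0 : 0 < eps ^+ 2 by apply: exprn_gt0.
have gpos : forall (M : 'M[R]_(n, p)) i k, 0 < gradTV eps N M i k.
  move=> M i k; rewrite sqrtr_gt0; apply: (lt_le_trans e0); rewrite lerDl.
  by apply: sumr_ge0 => l _; apply: sqr_ge0.
split; [split|split].
- move=> K A _ _; rewrite /TV /QTV; apply: ler_sum => k _.
  apply: ler_wpM2l => //; apply: ler_sum => i _.
  exact: (@surr_term R eps _ (fun l => l \in N i) (fun l => K i k) (fun l => K l k)
            (fun l => A i k) (fun l => A l k)).
- move=> K _; rewrite /TV /QTV; apply: eq_bigr => k _; congr (_ * _).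
  apply: eq_bigr => i _.
  have -> : eps ^+ 2 + \sum_(l in N i) ((K i k - K l k) * (K i k - K l k) +
      (K l k - K l k) ^+ 2 + (K i k - K i k) ^+ 2) = gradTV eps N K i k ^+ 2.
    rewrite /gradTV sqr_sqrtr; last first.
      by apply: addr_ge0; [apply: sqr_ge0 | apply: sumr_ge0 => l _; apply: sqr_ge0].
    congr (_ + _); apply: eq_bigr => l _; ring.
  have := gpos K i k; move: (gradTV eps N K i k) => g g0.
  by rewrite expr2 mulfK // gt_eqF.
- exists (fun i k x (A : 'M[R]_(n, p)) => psi k * (
    (eps ^+ 2 + \sum_(l in N i) (x * (A i k - A l k) + (x - A i k) ^+ 2)) / gradTV eps N A i k
    + \sum_(j < n) (if i \in N j then (- (x * (A j k - A i k)) + (x - A i k) ^+ 2) / gradTV eps N A j k else 0))).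
  move=> K A _ _; rewrite /QTV exchange_big /=; apply: eq_bigr => k _.
  rewrite -mulr_sumr; congr (_ * _); rewrite big_split /=.
  transitivity (\sum_(i < n) ((eps ^+ 2 + \sum_(l in N i) (K i k * (A i k - A l k) + (K i k - A i k) ^+ 2)) / gradTV eps N A i k
     + \sum_(l in N i) ((- (K l k * (A i k - A l k)) + (K l k - A l k) ^+ 2) / gradTV eps N A i k))).
    apply: eq_bigr => i _.
    rewrite -mulr_suml -mulrDl; congr (_ / _).
    rewrite -addrA -big_split /=; congr (_ + _); apply: eq_bigr => l _; ring.
  rewrite big_split /=; congr (_ + _).
  under eq_bigr => i _ do rewrite big_mkcond.
  rewrite exchange_big /=; apply: eq_bigr => l _; apply: eq_bigr => j _.
  by case: ifP.
- move=> A X Y t _ _ _ t0 t1; rewrite /QTV.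
  apply: conv_sum => k _; apply: conv_scale => //.
  apply: conv_sum => i _; apply: conv_div => //; apply: conv_add.
  apply: conv_sum => l _; rewrite !mxE; exact: conv_term.
Qed.
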